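(* Let $C_{1/3}$ be the middle-third Cantor set and $C(1/3)=C_{1/3}\times C_{1/3}$. Then the interior of $C(1/3)+S^1$ is non-empty.
   Context: $C_{1/3}=\{\tfrac23\sum_{k\ge1}a_k 3^{-(k-1)}: a_k\in\{0,1\}\}\subset[0,1]$; $S^1$ is the Euclidean unit circle in $\mathbb{R}^2$; $X+Y=\{x+y:x\in X,y\in Y\}$. *)

(* Defs.v *)
From HB Require Import structures.
From mathcomp Require Import all_boot all_order all_algebra.
From mathcomp Require Import all_classical all_reals all_analysis.
Set Implicit Arguments. Unset Strict Implicit. Unset Printing Implicit Defensive.
Import Order.TTheory GRing.Theory Num.Theory.
Import numFieldNormedType.Exports.
Local Open Scope classical_set_scope.
Local Open Scope ring_scope.

(* Middle-third Cantor set: { 2/3 * sum_{k>=1} a_k 3^{-(k-1)} : a_k in {0,1} },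
   reindexed with k' = k-1 >= 0. *)
Definition cantor_third (R : realType) : set R :=
  [set x : R | exists a : nat -> bool,
      x = (2 / 3) * limn (fun n : nat => \sum_(0 <= k < n) ((a k)%:R / 3 ^+ k : R))].

Definition cantor_square (R : realType) : set (R * R) :=
  [set p | @cantor_third R p.1 /\ @cantor_third R p.2].

Definition unit_circle (R : realType) : set (R * R) :=
  [set p | p.1 ^+ 2 + p.2 ^+ 2 = 1].

Definition minkowski_sum (R : realType) (X Y : set (R * R)) : set (R * R) :=
  [set z | exists x y, X x /\ Y y /\ z = (x.1 + y.1, x.2 + y.2)].

(* Main.v *)
Require Import Defs.
From mathcomp Require Import all_boot all_order all_algebra.
From mathcomp Require Import all_classical all_reals all_analysis.
From mathcomp Require Import ring lra.
Import Order.TTheory GRing.Theory Num.Theory.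
Import numFieldNormedType.Exports.
Local Open Scope classical_set_scope.
Local Open Scope ring_scope.

Section S.
Variable R : realType.
Definition F (x y p1 p2 : R) := (p1 - x)^+2 + (p2 - y)^+2 - 1.

Definition zbox (x y : R) : Prop :=
  [/\ 1/486 - 273/305 - 1/972 <= x, x <= 1/486 - 273/305 + 1/972,
   1/486 + 136/305 - 1/972 <= y & y <= 1/486 + 136/305 + 1/972].

Lemma region (x y P1 P2 h k : R) : zbox x y ->
  0 <= P1 -> P1 <= 1/243 -> -(2/243) <= P2 -> P2 <= 1/243 ->
  0 <= h -> h <= 1/243 -> 0 <= k -> k <= 2/243 ->
  [/\ 2*(P2-y)+k < 0, (19/10)*(-(2*(P2-y)+k)) <= 2*(P1-x)+h
   & 2*(P1-x)+h <= (21/10)*(-(2*(P2-y)+k))].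
Proof. case=> *; split; lra. Qed.

Lemma Fdiff (x y P1 P2 q1 q2 : R) : F x y q1 q2 = F x y P1 P2 +
  (q1 - P1) * (2*(P1-x)+(q1-P1)) + (q2-P2) * (2*(P2-y)+(q2-P2)).
Proof. rewrite /F; ring. Qed.

Lemma coneA (x y P1 P2 q1 q2 : R) : zbox x y ->
  0 <= P1 -> P1 <= 1/243 -> -(2/243) <= P2 -> P2 <= 1/243 ->
  0 <= q1 - P1 -> q1 - P1 <= 1/243 -> 0 <= q2 - P2 -> q2 - P2 <= 2/243 ->
  (21/10) * (q1 - P1) <= q2 - P2 ->
  F x y P1 P2 <= 0 -> F x y q1 q2 <= 0.
Proof.
move=> zb hp1 hp2 hp3 hp4 hh1 hh2 hk1 hk2 hk FP.
have [hb ha1 ha2] := @region x y P1 P2 (q1-P1) (q2-P2) zb hp1 hp2 hp3 hp4 hh1 hh2 hk1 hk2.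
rewrite (Fdiff _ _ P1 P2).
set h := q1 - P1 in hh1 hh2 hk ha1 ha2 *.
set k := q2 - P2 in hk1 hk2 hk hb ha1 ha2 *.
set al := 2*(P1-x)+h in ha1 ha2 *.
set be := 2*(P2-y)+k in hb ha1 ha2 *.
have h1 : h * al <= h * ((21/10) * (- be)) by rewrite ler_wpM2l.
have h2 : k * be <= ((21/10) * h) * be by rewrite ler_wnM2r // ltW.
lra.
Qed.

Lemma coneB (x y P1 P2 q1 q2 : R) : zbox x y ->
  0 <= P1 -> P1 <= 1/243 -> -(2/243) <= P2 -> P2 <= 1/243 ->
  0 <= q1 - P1 -> q1 - P1 <= 1/243 -> 0 <= q2 - P2 -> q2 - P2 <= 2/243 ->
  q2 - P2 <= (19/10) * (q1 - P1) ->
  0 <= F x y P1 P2 -> 0 <= F x y q1 q2.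
Proof.
move=> zb hp1 hp2 hp3 hp4 hh1 hh2 hk1 hk2 hk FP.
have [hb ha1 ha2] := @region x y P1 P2 (q1-P1) (q2-P2) zb hp1 hp2 hp3 hp4 hh1 hh2 hk1 hk2.
rewrite (Fdiff _ _ P1 P2).
set h := q1 - P1 in hh1 hh2 hk ha1 ha2 *.
set k := q2 - P2 in hk1 hk2 hk hb ha1 ha2 *.
set al := 2*(P1-x)+h in ha1 ha2 *.
set be := 2*(P2-y)+k in hb ha1 ha2 *.
have h1 : h * ((19/10) * (- be)) <= h * al by rewrite ler_wpM2l.
have h2 : ((19/10) * h) * be <= k * be by rewrite ler_wnM2r // ltW.
lra.
Qed.

Definition Inv (x y a b r : R) : Prop :=
  [/\ 0 <= a, a + r <= 1/243, 0 <= b, b + r <= 1/243 &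
      (F x y a (b+r) <= 0 /\ 0 <= F x y (a+r) b)].

Definition sel (x y a b r : R) : bool * bool :=
  if 0 < F x y a (b + r/3) then (false, true)
  else if 0 < F x y a (b - r/2) then (false, false)
  else if 0 < F x y a (b - 17*r/15) then (true, true) else (true, false).

Ltac sd := match goal with
  | |- is_true (F _ _ _ _ <= _) => idtac
  | |- is_true (_ <= F _ _ _ _) => idtac
  | _ => (repeat match goal with
       | H : is_true (F _ _ _ _ <= _) |- _ => clear H
       | H : is_true (_ <= F _ _ _ _) |- _ => clear H
       | H : is_true (_ < F _ _ _ _) |- _ => clear H
       | H : zbox _ _ |- _ => clear H end); lra end.

Lemma step (x y a b r : R) : zbox x y -> 0 < r -> Inv x y a b r ->
  Inv x y (a + ((sel x y a b r).1)%:R * (2/3*r))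
          (b + ((sel x y a b r).2)%:R * (2/3*r)) (r/3).
Proof.
move=> zb rp [ha1 ha2 hb1 hb2 [F1 F2]].
rewrite /sel.
case: ifP => H1; last move/negbT: H1; last rewrite -leNgt => H1.
  rewrite /= mul0r mul1r addr0; split; try sd; split.
  - apply: (@coneA x y a (b+r) _ _ zb); sd; exact F1.
  - apply: (@coneB x y a (b+r/3) _ _ zb); sd; exact: ltW.
case: ifP => H2; last move/negbT: H2; last rewrite -leNgt => H2.
  rewrite /= !mul0r !addr0; split; try sd; split.
  - apply: (@coneA x y a (b+r/3) _ _ zb); sd; exact H1.
  - apply: (@coneB x y a (b-r/2) _ _ zb); sd; exact: ltW.
case: ifP => H3; last move/negbT: H3; last rewrite -leNgt => H3.
  rewrite /= !mul1r; split; try sd; split.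
  - apply: (@coneA x y a (b-r/2) _ _ zb); sd; exact H2.
  - apply: (@coneB x y a (b-17*r/15) _ _ zb); sd; exact: ltW.
rewrite /= mul0r mul1r addr0; split; try sd; split.
- apply: (@coneA x y a (b-17*r/15) _ _ zb); sd; exact H3.
- apply: (@coneB x y (a+r) b _ _ zb); sd; exact F2.
Qed.
Definition rr (m : nat) : R := (3 ^+ m)^-1.

Fixpoint st (x y : R) (m : nat) : R * R :=
  match m with
  | 0 => (0, 0)
  | m'.+1 => let p := st x y m' in
     if (m' < 5)%N then p else
     let ij := sel x y p.1 p.2 (rr m') in
     (p.1 + (ij.1)%:R * (2/3 * rr m'), p.2 + (ij.2)%:R * (2/3 * rr m'))
  end.

Definition dig1 x y m := if (m < 5)%N then false else (sel x y (st x y m).1 (st x y m).2 (rr m)).1.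
Definition dig2 x y m := if (m < 5)%N then false else (sel x y (st x y m).1 (st x y m).2 (rr m)).2.

Definition S (d : nat -> bool) : nat -> R :=
  fun n => \sum_(0 <= k < n) ((d k)%:R / 3 ^+ k : R).

Lemma SS d m : S d m.+1 = S d m + (d m)%:R * rr m.
Proof. by rewrite /S big_nat_recr. Qed.

Lemma S0 d : S d 0 = 0.
Proof. by rewrite /S big_geq. Qed.

Lemma st1 x y m : (st x y m).1 = 2/3 * S (dig1 x y) m.
Proof.
elim: m => [|m IH]; first by rewrite S0 mulr0.
rewrite SS /= /dig1; case: (m < 5)%N => /=.
  rewrite IH; ring.
rewrite IH; ring.
Qed.

Lemma st2 x y m : (st x y m).2 = 2/3 * S (dig2 x y) m.
Proof.
elim: m => [|m IH]; first by rewrite S0 mulr0.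
rewrite SS /= /dig2; case: (m < 5)%N => /=.
  rewrite IH; ring.
rewrite IH; ring.
Qed.

Lemma rr_gt0 m : 0 < rr m.
Proof. by rewrite /rr invr_gt0 exprn_gt0. Qed.

Lemma rrS m : rr m.+1 = rr m / 3.
Proof. by rewrite /rr exprS invfM mulrC. Qed.

Lemma rr5 : rr 5 = 1/243.
Proof. by rewrite /rr div1r -natrX. Qed.

Lemma st5 x y n : (n <= 5)%N -> st x y n = (0, 0).
Proof.
elim: n => [//|n IH] Hn /=.
by rewrite (leq_trans (ltnSn n) Hn) IH // ltnW.
Qed.

Lemma init (x y : R) : zbox x y -> Inv x y 0 0 (1/243).
Proof.
case=> h1 h2 h3 h4; rewrite /Inv /F; split; try lra; split; nra.
Qed.

Lemma stS (x y : R) m : (5 <= m)%N -> st x y m.+1 =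
  ((st x y m).1 + ((sel x y (st x y m).1 (st x y m).2 (rr m)).1)%:R * (2/3 * rr m),
   (st x y m).2 + ((sel x y (st x y m).1 (st x y m).2 (rr m)).2)%:R * (2/3 * rr m)).
Proof. by move=> Hm /=; rewrite ltnNge Hm. Qed.

Lemma inv_all x y n : zbox x y ->
  Inv x y (st x y (5+n)).1 (st x y (5+n)).2 (rr (5+n)).
Proof.
move=> zb; elim: n => [|n IH].
  by rewrite addn0 st5 // rr5; apply: init.
rewrite addnS stS ?leq_addr // rrS.
exact: step zb (rr_gt0 _) IH.
Qed.

Lemma S_ge0_step d k : 0 <= (d k)%:R / (3:R) ^+ k.
Proof. by rewrite divr_ge0 // exprn_ge0. Qed.

Lemma S_mono d n m : (n <= m)%N -> S d n <= S d m.
Proof.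
move=> Hnm; rewrite /S (big_cat_nat (n:=n) (p:=m)) //= lerDl.
by apply: sumr_ge0 => i _; rewrite divr_ge0 // exprn_ge0.
Qed.

Lemma S_tail d n p : S d (n + p) <= S d n + 3/2 * (rr n - rr (n + p)).
Proof.
elim: p => [|p IH]; first by rewrite addn0 subrr mulr0 addr0.
rewrite addnS SS rrS.
have h1 : (d (n + p))%:R <= 1 :> R by case: (d _).
have h2 := rr_gt0 (n + p).
have h3 : (d (n + p))%:R * rr (n + p) <= rr (n + p).
  by rewrite ler_piMl // ltW.
lra.
Qed.

Lemma S_bound d n m : S d m <= S d n + 3/2 * rr n.
Proof.
have h := rr_gt0 n.
case: (leqP n m) => H.
  rewrite -(subnKC H); have := S_tail d n (m - n).
  have := rr_gt0 (n + (m - n)); lra.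
have := @S_mono d m n (ltnW H); lra.
Qed.

Lemma S_cvg d : cvgn (S d).
Proof.
apply: nondecreasing_is_cvgn.
  by move=> n m; apply: S_mono.
exists (3/2) => _ [m _ <-].
have := S_bound d 0 m; rewrite S0 /rr expr0 invr1; lra.
Qed.

Lemma lim_bounds d n : S d n <= limn (S d) <= S d n + 3/2 * rr n.
Proof.
apply/andP; split.
  apply: nondecreasing_cvgn_le; last exact: S_cvg.
  by move=> a b; apply: S_mono.
apply: limr_le; first exact: S_cvg.
by apply: nearW => m; apply: S_bound.
Qed.

Lemma Fclose (x y a b r c1 c2 : R) : zbox x y -> 0 < r -> Inv x y a b r ->
  a <= c1 -> c1 <= a + r -> b <= c2 -> c2 <= b + r ->
  `|F x y c1 c2| <= 4 * r.
Proof.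
move=> zb rp [ha1 ha2 hb1 hb2 [F1 F2]] hc1 hc2 hc3 hc4.
case: zb => zx1 zx2 zy1 zy2.
rewrite ler_norml; apply/andP; split.
  rewrite (Fdiff _ _ (a + r) b).
  have e1 : (c1 - (a+r)) * (2*((a+r)-x)+(c1-(a+r))) = - ((a + r - c1) * (2*((a+r)-x)+(c1-(a+r)))) by ring.
  have p1 : (a + r - c1) * (2*((a+r)-x)+(c1-(a+r))) <= r * 2.
    by apply: ler_pM; clear F1 F2; lra.
  have e2 : (c2 - b) * (2*(b-y)+(c2-b)) = - ((c2 - b) * (-(2*(b-y)+(c2-b)))) by ring.
  have p2 : (c2 - b) * (-(2*(b-y)+(c2-b))) <= r * 2.
    by apply: ler_pM; clear F1 F2; lra.
  lra.
rewrite (Fdiff _ _ a (b + r)).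
have p1 : (c1 - a) * (2*(a-x)+(c1-a)) <= r * 2.
  by apply: ler_pM; clear F1 F2; lra.
have e2 : (c2 - (b+r)) * (2*((b+r)-y)+(c2-(b+r))) = (b + r - c2) * (-(2*((b+r)-y)+(c2-(b+r)))) by ring.
have p2 : (b + r - c2) * (-(2*((b+r)-y)+(c2-(b+r)))) <= r * 2.
  by apply: ler_pM; clear F1 F2; lra.
lra.
Qed.

Lemma small_zero (t : R) : (forall n, `|t| <= 4 * rr (5 + n)) -> t = 0.
Proof.
move=> H; apply/eqP; apply/negPn/negP => tn0.
have tp : 0 < `|t| by rewrite normr_gt0.
set n := Num.Def.archi_bound (4 / `|t|).
have hn : 4 / `|t| < n%:R by apply: archi_boundP; rewrite divr_ge0 // ltW.
have h3 : (n%:R : R) < 3 ^+ (5 + n).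
  rewrite -natrX ltr_nat; apply: leq_trans (ltn_expl _ _) => //.
  by rewrite ltnS leq_addl.
have h4 : 4 < `|t| * 3 ^+ (5 + n).
  have : 4 / `|t| * `|t| < 3 ^+ (5 + n) * `|t|.
    by rewrite ltr_pM2r //; apply: lt_trans h3.
  by rewrite divfK ?gt_eqF // mulrC.
have := H n; rewrite /rr => h5.
have h6 : `|t| * 3 ^+ (5 + n) <= 4 * (3 ^+ (5 + n))^-1 * 3 ^+ (5 + n).
  by rewrite ler_pM2r ?exprn_gt0.
rewrite mulfVK ?expf_neq0 // in h6.
lra.
Qed.

End S.

Arguments F {R}. Arguments zbox {R}. Arguments Inv {R}. Arguments sel {R}.
Arguments st {R}. Arguments dig1 {R}. Arguments dig2 {R}. Arguments inv_all {R}.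
Arguments Fclose {R}. Arguments lim_bounds {R}. Arguments st1 {R}. Arguments st2 {R}.
Arguments small_zero {R}. Arguments rr {R}. Arguments rr_gt0 {R}. Arguments S {R}.

Theorem mainTheorem4 (R : realType) :
  (interior (minkowski_sum (@cantor_square R) (@unit_circle R)) != set0)%classic.
Proof.
apply/set0P; exists ((1/486 - 273/305 : R), (1/486 + 136/305 : R)).
rewrite /interior; apply/nbhs_ballP; exists (1/972 : R) => /=; first lra.
move=> [x y] [Hx Hy].
have zb : zbox x y.
  move: Hx Hy; rewrite /ball /= !ltr_norml => /andP[? ?] /andP[? ?]; split; lra.
pose c1 : R := 2/3 * limn (S (dig1 x y)).
pose c2 : R := 2/3 * limn (S (dig2 x y)).
have F0 : F x y c1 c2 = 0.
  apply: small_zero => n.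
  have I := inv_all x y n zb.
  have [l1 u1] := andP (@lim_bounds R (dig1 x y) (5 + n)).
  have [l2 u2] := andP (@lim_bounds R (dig2 x y) (5 + n)).
  have rp := @rr_gt0 R (5 + n).
  apply: (Fclose x y _ _ _ c1 c2 zb rp I); rewrite ?st1 ?st2 /c1 /c2; lra.
exists (c1, c2), (x - c1, y - c2); split; last split.
- by split; [exists (dig1 x y) | exists (dig2 x y)].
- rewrite /unit_circle /=; move: F0; rewrite /F.
  have -> : (x - c1)^+2 = (c1 - x)^+2 by rewrite -sqrrN opprB.
  have -> : (y - c2)^+2 = (c2 - y)^+2 by rewrite -sqrrN opprB.
  lra.
- by rewrite /= !(addrC c1) !(addrC c2) !subrK.
Qed.
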